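(* Let $T:\mathbb{Z}\to\mathbb{Z}$ be defined by $T(n)=n/2$ if $n$ is even and $T(n)=(3n+1)/2$ if $n$ is odd. For every nonzero integer $n$, the $T$-trajectory $(T^k(n))_{k\ge 0}$ has the following structure: there is $K\ge 0$ such that $T^k(n)\equiv 0\pmod 3$ for $0\le k<K$, and for $k\ge K$ every term $T^k(n)$ is congruent to $2$ or $8\pmod 9$ except for isolated terms (no two in succession) that are congruent to $1\pmod 3$ and isolated terms (no two in succession) that are congruent to $5\pmod 9$; that is, for all $k\ge K$, $T^k(n)\not\equiv 0\pmod 3$, it is not the case that $T^k(n)\equiv T^{k+1}(n)\equiv 1\pmod 3$, and it is not the case that $T^k(n)\equiv T^{k+1}(n)\equiv 5\pmod 9$.
   Context: $T^0(n)=n$, $T^{k+1}(n)=T(T^k(n))$. *)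

(* Defs.v *)
From Stdlib Require Import ZArith.
Open Scope Z_scope.

(* The 3x+1 map T : Z -> Z, T(n) = n/2 (n even), (3n+1)/2 (n odd).
   In both cases the division is exact, so Z.div is the true quotient. *)
Definition T (n : Z) : Z :=
  if Z.even n then n / 2 else (3 * n + 1) / 2.

Definition Titer (k : nat) (n : Z) : Z := Nat.iter k T n.

(* Main.v *)
Require Import Defs.
From Stdlib Require Import ZArith Lia.
Open Scope Z_scope.

Lemma Tspec x : (x = 2 * (T x)) \/ (2 * T x = 3 * x + 1 /\ x mod 2 = 1).
Proof.
  unfold T. destruct (Z.even x) eqn:E.
  - left. apply Z.even_spec in E. destruct E as [q Hq]. subst. rewrite Z.mul_comm, Z.div_mul by lia. lia.
  - right. assert (Z.odd x = true) by (rewrite <- Z.negb_even, E; reflexivity).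
    apply Z.odd_spec in H. destruct H as [q Hq]. subst. replace (3 * (2 * q + 1) + 1) with ((3*q+2)*2) by ring. rewrite Z.div_mul by lia. split; [ring|]. rewrite Z.add_comm, Z.mul_comm, Z.mod_add by lia. reflexivity.
Qed.

Ltac modf x := pose proof (Z.mod_pos_bound x 3 ltac:(lia)); pose proof (Z.mod_pos_bound x 9 ltac:(lia));
  pose proof (Z.mod_pos_bound x 2 ltac:(lia)); pose proof (Z.div_mod x 3 ltac:(lia));
  pose proof (Z.div_mod x 9 ltac:(lia)); pose proof (Z.div_mod x 2 ltac:(lia)).

Lemma L1 x : x mod 3 <> 0 -> T x mod 3 <> 0.
Proof. modf x; modf (T x); destruct (Tspec x); lia. Qed.
Lemma L2 x : x mod 3 = 1 -> T x mod 3 <> 1.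
Proof. modf x; modf (T x); destruct (Tspec x); lia. Qed.
Lemma L3 x : x mod 9 = 5 -> T x mod 9 <> 5.
Proof. modf x; modf (T x); destruct (Tspec x); lia. Qed.

Lemma iter_shift k n : Titer (S k) n = Titer k (T n).
Proof.
  unfold Titer. induction k; simpl; auto. simpl in IHk. rewrite IHk. reflexivity.
Qed.

Lemma G m : m mod 3 <> 0 -> forall k,
  Titer k m mod 3 <> 0 /\
  ~ (Titer k m mod 3 = 1 /\ Titer (S k) m mod 3 = 1) /\
  ~ (Titer k m mod 9 = 5 /\ Titer (S k) m mod 9 = 5).
Proof.
  intros Hm k.
  assert (H : forall k, Titer k m mod 3 <> 0).
  { induction k0; simpl; auto. apply L1; auto. }
  split; [apply H|]. change (Titer (S k) m) with (T (Titer k m)).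
  split; intros [A B]; [apply (L2 _ A) | apply (L3 _ A)]; auto.
Qed.

Theorem theorem4 : forall n : Z, n <> 0 ->
  exists K : nat,
    (forall k : nat, (k < K)%nat -> Titer k n mod 3 = 0) /\
    (forall k : nat, (K <= k)%nat ->
       Titer k n mod 3 <> 0 /\
       ~ (Titer k n mod 3 = 1 /\ Titer (S k) n mod 3 = 1) /\
       ~ (Titer k n mod 9 = 5 /\ Titer (S k) n mod 9 = 5)).
Proof.
  intro n.
  remember (Z.to_nat (Z.abs n)) as N eqn:HN.
  revert n HN. induction N as [N IH] using (well_founded_induction lt_wf).
  intros n HN Hn.
  destruct (Z.eq_dec (n mod 3) 0) as [H3|H3].
  2:{ exists 0%nat. split; [intros; lia|]. intros; apply G; auto. }
  destruct (Tspec n) as [He|[Ho Hp]].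
  - assert (Hlt : (Z.to_nat (Z.abs (T n)) < N)%nat) by lia.
    destruct (IH _ Hlt (T n) eq_refl ltac:(lia)) as [K [A B]].
    exists (S K). split.
    + intros [|j] Hj; [exact H3|]. rewrite iter_shift. apply A. lia.
    + intros [|j] Hj; [lia|]. rewrite !(iter_shift _ n). apply B. lia.
  - exists 1%nat. split.
    + intros [|j] Hj; [exact H3|lia].
    + intros [|j] Hj; [lia|]. rewrite !(iter_shift _ n). apply G. modf n; modf (T n); lia.
Qed.
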